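(* Let $A=A_s+A_d\epsilon\in\mathbb{D}^{m\times n}$. Then the DMPGI of the essential part $A_e$ exists and $$A^G=A_e^D.$$ In particular, if all nonzero singular values of $A$ are appreciable, then the DMPGI $A^D$ exists and $A^D=A^G$; otherwise $A^D$ does not exist and $A^G$ is the DMPGI of $A_e$.
   Context: A dual real number is $a=a_s+a_d\epsilon$ with $a_s,a_d\in\mathbb R$, $\epsilon\neq0$, $\epsilon^2=0$; appreciable if $a_s\neq0$, infinitesimal otherwise; ordered by $a>b$ iff $a_s>b_s$, or $a_s=b_s$ and $a_d>b_d$. A dual real matrix is $A=A_s+A_d\epsilon$ with real $A_s,A_d$; $A^\top=A_s^\top+A_d^\top\epsilon$; orthogonal means $U^\top U=UU^\top=I$. Every $A\in\mathbb{D}^{m\times n}$ has an SVD $A=U\Sigma V^\top$ with $U,V$ orthogonal dual real matrices and $\Sigma$ diagonal with entries $\mu_1\ge\dots\ge\mu_r$ positive appreciable, $\mu_{r+1}\ge\dots\ge\mu_t$ positive infinitesimal, and zeros (unique). The essential part is $A_e=U\begin{bmatrix}\mathrm{diag}(\mu_1,\dots,\mu_r)&O\\O&O\end{bmatrix}V^\top$. The GMPI $A^G$ is the unique $X$ with $AXA=A_e$, $XAX=X$, $(AX)^\top=AX$, $(XA)^\top=XA$. The DMPGI $A^D$ of a dual real matrix $B$ is a matrix $X$ satisfying $BXB=B$, $XBX=X$, $(BX)^\top=BX$, $(XB)^\top=XB$ (when it exists). *)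

(* Defs.v *)
From HB Require Import structures.
From mathcomp Require Import all_boot all_order all_algebra.
From mathcomp Require Import reals.
Set Implicit Arguments. Unset Strict Implicit. Unset Printing Implicit Defensive.
Import Order.TTheory GRing.Theory Num.Theory.
Local Open Scope ring_scope.

Section Dual.
Variable R : realType.

(* dual real number a = ds + dd eps *)
Record dual := Dual { ds : R; dd : R }.

Definition dle (a b : dual) : Prop :=
  ds a < ds b \/ (ds a = ds b /\ dd a <= dd b).

Definition dzero : dual := Dual 0 0.
Definition pos_appreciable (a : dual) : Prop := 0 < ds a.
Definition pos_infinitesimal (a : dual) : Prop := ds a = 0 /\ 0 < dd a.

(* dual real matrix A = A_s + A_d eps *)
Record dmx (m n : nat) := DMx { mxs : 'M[R]_(m, n); mxd : 'M[R]_(m, n) }.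

Definition dmul m n p (A : dmx m n) (B : dmx n p) : dmx m p :=
  DMx (mxs A *m mxs B) (mxs A *m mxd B + mxd A *m mxs B).

Definition dtr m n (A : dmx m n) : dmx n m := DMx (mxs A)^T (mxd A)^T.

Definition did n : dmx n n := DMx 1%:M 0.

Definition dorthogonal n (U : dmx n n) : Prop :=
  dmul (dtr U) U = did n /\ dmul U (dtr U) = did n.

Definition ddiag m n (mu : nat -> dual) : dmx m n :=
  DMx (\matrix_(i < m, j < n) if (i : nat) == j then ds (mu i) else 0)
      (\matrix_(i < m, j < n) if (i : nat) == j then dd (mu i) else 0).

(* A = U Sigma V^T is an SVD of A, where Sigma = diag(mu_0,...,mu_{min(m,n)-1}),
   mu_0 >= ... >= mu_{r-1} positive appreciable, mu_r >= ... >= mu_{t-1}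
   positive infinitesimal, and the remaining diagonal entries are zero
   (indices are 0-based). *)
Definition is_dsvd m n (A : dmx m n) (U : dmx m m) (mu : nat -> dual)
    (r t : nat) (V : dmx n n) : Prop :=
  [/\ dorthogonal U, dorthogonal V,
      (r <= t)%N /\ (t <= minn m n)%N,
      [/\ (forall i, (i < r)%N -> pos_appreciable (mu i)),
          (forall i, (r <= i)%N -> (i < t)%N -> pos_infinitesimal (mu i)),
          (forall i, (t <= i)%N -> (i < minn m n)%N -> mu i = dzero)
        & (forall i j, (i <= j)%N -> (j < t)%N -> dle (mu j) (mu i))]
    & A = dmul (dmul U (ddiag m n mu)) (dtr V)].

Definition ess_part m n (U : dmx m m) (mu : nat -> dual) (r : nat)
    (V : dmx n n) : dmx m n :=
  dmul (dmul U (ddiag m n (fun i => if (i < r)%N then mu i else dzero)))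
       (dtr V).

Definition is_GMPI m n (A : dmx m n) (Ae : dmx m n) (X : dmx n m) : Prop :=
  [/\ dmul (dmul A X) A = Ae, dmul (dmul X A) X = X,
      dtr (dmul A X) = dmul A X & dtr (dmul X A) = dmul X A].

Definition is_DMPGI m n (B : dmx m n) (X : dmx n m) : Prop :=
  [/\ dmul (dmul B X) B = B, dmul (dmul X B) X = X,
      dtr (dmul B X) = dmul B X & dtr (dmul X B) = dmul X B].

End Dual.

(* Main.v *)
Require Import Defs.
From HB Require Import structures.
From mathcomp Require Import all_boot all_order all_algebra.
From mathcomp Require Import reals.
From mathcomp Require Import ring.
Set Implicit Arguments. Unset Strict Implicit. Unset Printing Implicit Defensive.
Import Order.TTheory GRing.Theory Num.Theory.
Local Open Scope ring_scope.

Section Alg.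
Variable R : realType.
Implicit Types (a b : dual R).

Lemma dmulA m n p q (A : dmx R m n) (B : dmx R n p) (C : dmx R p q) :
  dmul (dmul A B) C = dmul A (dmul B C).
Proof.
case: A => As Ad; case: B => Bs Bd; case: C => Cs Cd; rewrite /dmul /=.
by congr DMx; rewrite ?mulmxA // !mulmxDl !mulmxDr !mulmxA addrA.
Qed.

Lemma dtr_mul m n p (A : dmx R m n) (B : dmx R n p) :
  dtr (dmul A B) = dmul (dtr B) (dtr A).
Proof.
case: A => As Ad; case: B => Bs Bd; rewrite /dmul /dtr /=.
by congr DMx; rewrite ?trmx_mul // linearD /= !trmx_mul addrC.
Qed.

Lemma dtrK m n (A : dmx R m n) : dtr (dtr A) = A.
Proof. by case: A => As Ad; rewrite /dtr /= !trmxK. Qed.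

Lemma dmul1l m n (A : dmx R m n) : dmul (did R m) A = A.
Proof. by case: A => As Ad; rewrite /dmul /did /= !mul1mx mul0mx addr0. Qed.

Lemma dmul1r m n (A : dmx R m n) : dmul A (did R n) = A.
Proof. by case: A => As Ad; rewrite /dmul /did /= !mulmx1 mulmx0 add0r. Qed.

Lemma orthKl n p (U : dmx R n n) (X : dmx R n p) :
  dorthogonal U -> dmul (dtr U) (dmul U X) = X.
Proof. by case=> H1 H2; rewrite -dmulA H1 dmul1l. Qed.

Lemma orthKr n p (U : dmx R n n) (X : dmx R n p) :
  dorthogonal U -> dmul U (dmul (dtr U) X) = X.
Proof. by case=> H1 H2; rewrite -dmulA H2 dmul1l. Qed.

Lemma orthK1 n (U : dmx R n n) : dorthogonal U -> dmul (dtr U) U = did R n.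
Proof. by case. Qed.

Definition rdiag m n (f : nat -> R) : 'M[R]_(m, n) :=
  \matrix_(i < m, j < n) if (i : nat) == j then f i else 0.

Lemma rdiag_mul m n p (f g : nat -> R) :
  rdiag m n f *m rdiag n p g = rdiag m p (fun i => if (i < n)%N then f i * g i else 0).
Proof.
apply/matrixP => i k; rewrite !mxE.
case: (ltnP i n) => Hin.
  rewrite (bigD1 (Ordinal Hin)) //= big1 => [|j Hj]; last first.
    rewrite !mxE; case: eqP => [Hij|]; last by rewrite mul0r.
    by case/eqP: Hj; apply: val_inj.
  rewrite !mxE eqxx addr0; case: eqP => // _; by rewrite mulr0.
rewrite big1 => [|j _]; first by case: eqP.
rewrite !mxE; case: eqP => [Hij|]; last by rewrite mul0r.
by move: (ltn_ord j); rewrite -Hij ltnNge Hin.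
Qed.

Lemma rdiag_tr m n f : (rdiag m n f)^T = rdiag n m f.
Proof.
apply/matrixP => i j; rewrite !mxE; case: eqP => [H|H]; case: eqP => [H'|H'] //.
- by rewrite H.
- by case: H'.
- by case: H.
Qed.

Lemma rdiag_add m n f g : rdiag m n f + rdiag m n g = rdiag m n (fun i => f i + g i).
Proof. by apply/matrixP => i j; rewrite !mxE; case: eqP => //; rewrite addr0. Qed.

Lemma rdiag_eq m n f g : (forall i, (i < minn m n)%N -> f i = g i) ->
  rdiag m n f = rdiag m n g.
Proof.
move=> H; apply/matrixP => i j; rewrite !mxE; case: eqP => // Hij.
by rewrite H // leq_min ltn_ord /= Hij ltn_ord.
Qed.

Definition dm a b := Dual (ds a * ds b) (ds a * dd b + dd a * ds b).

Lemma ddiagE m n (mu : nat -> dual R) :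
  ddiag m n mu = DMx (rdiag m n (fun i => ds (mu i))) (rdiag m n (fun i => dd (mu i))).
Proof. by []. Qed.

Lemma ddiag_mul m n p (a b : nat -> dual R) :
  dmul (ddiag m n a) (ddiag n p b) =
  ddiag m p (fun i => if (i < n)%N then dm (a i) (b i) else dzero R).
Proof.
rewrite !ddiagE /dmul /= !rdiag_mul rdiag_add; congr DMx; apply: rdiag_eq => i _;
by case: (i < n)%N => //=; rewrite addr0.
Qed.

Lemma ddiag_tr m n (a : nat -> dual R) : dtr (ddiag m n a) = ddiag n m a.
Proof. by rewrite !ddiagE /dtr /= !rdiag_tr. Qed.

Lemma ddiag_eq m n (f g : nat -> dual R) : (forall i, (i < minn m n)%N -> f i = g i) ->
  ddiag m n f = ddiag m n g.
Proof. by move=> H; rewrite !ddiagE; congr DMx; apply: rdiag_eq => i Hi; rewrite H. Qed.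

Definition dinv a := Dual (ds a)^-1 (- dd a / (ds a) ^+ 2).

Lemma dm0r a : dm a (dzero R) = dzero R.
Proof. by rewrite /dm /dzero /= !mulr0 addr0. Qed.
Lemma dm0l a : dm (dzero R) a = dzero R.
Proof. by rewrite /dm /dzero /= !mul0r addr0. Qed.

Lemma dm_inv1 a : ds a != 0 -> dm (dm a (dinv a)) a = a.
Proof. by case: a => x y /= Hx; rewrite /dm /dinv /=; congr Dual; field. Qed.
Lemma dm_inv2 a : ds a != 0 -> dm (dm (dinv a) a) (dinv a) = dinv a.
Proof. by case: a => x y /= Hx; rewrite /dm /dinv /=; congr Dual; field. Qed.

Lemma ddiag_mul' m n p q (a b : nat -> dual R) (Z : dmx R p q) :
  dmul (ddiag m n a) (dmul (ddiag n p b) Z) =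
  dmul (ddiag m p (fun i => if (i < n)%N then dm (a i) (b i) else dzero R)) Z.
Proof. by rewrite -dmulA ddiag_mul. Qed.

Lemma rdiag_row0 m n p (f : nat -> R) (M : 'M[R]_(n, p)) (i : 'I_m) j :
  f i = 0 -> (rdiag m n f *m M) i j = 0.
Proof.
move=> H; rewrite mxE big1 // => k _; rewrite mxE; case: eqP => _; last by rewrite mul0r.
by rewrite H mul0r.
Qed.

Lemma rdiag_col0 m n p (f : nat -> R) (M : 'M[R]_(p, m)) i (j : 'I_n) :
  f j = 0 -> (M *m rdiag m n f) i j = 0.
Proof.
move=> H; rewrite mxE big1 // => k _; rewrite mxE; case: eqP => E; last by rewrite mulr0.
by rewrite E H mulr0.
Qed.

Lemma L1 m n (A Ae : dmx R m n) X : is_GMPI A Ae X -> is_DMPGI Ae X.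
Proof.
case=> H1 H2 H3 H4.
have H2' : dmul X (dmul A X) = X by rewrite -dmulA.
have H2'' : forall p (Z : dmx R m p), dmul X (dmul A (dmul X Z)) = dmul X Z.
  by move=> p Z; rewrite -(dmulA A) -dmulA H2'.
split; rewrite -H1 !dmulA.
- by rewrite !H2''.
- by rewrite H2'' H2'.
- by rewrite H2'.
- by rewrite H2''.
Qed.

Lemma L2 m n (A Ae : dmx R m n) X :
  dmul A (dtr Ae) = dmul Ae (dtr Ae) -> dmul (dtr Ae) A = dmul (dtr Ae) Ae ->
  is_DMPGI Ae X -> is_GMPI A Ae X.
Proof.
move=> F1 F2 [E1 E2 E3 E4].
have Xeq1 : X = dmul (dtr Ae) (dmul (dtr X) X).
  by rewrite -{1}E2 -E4 dtr_mul dmulA.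
have Xeq2 : X = dmul (dmul X (dtr X)) (dtr Ae).
  by rewrite -{1}E2 dmulA -E3 dtr_mul -dmulA.
have AXe : dmul A X = dmul Ae X by rewrite Xeq1 -!dmulA F1.
have XAe : dmul X A = dmul X Ae by rewrite Xeq2 !dmulA F2.
split.
- by rewrite AXe dmulA XAe -dmulA E1.
- by rewrite XAe E2.
- by rewrite AXe E3.
- by rewrite XAe E4.
Qed.

End Alg.

Theorem theorem5p2 (R : realType) (m n : nat) (A : dmx R m n)
    (U : dmx R m m) (mu : nat -> dual R) (r t : nat) (V : dmx R n n) :
  is_dsvd A U mu r t V ->
  let Ae := ess_part U mu r V in
  (* the DMPGI of A_e exists, and A^G = A_e^D *)
  ((exists Y, is_DMPGI Ae Y) /\ (forall X, is_GMPI A Ae X <-> is_DMPGI Ae X)) /\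
  (* all nonzero singular values appreciable: A^D exists and A^D = A^G *)
  (t = r -> (exists Y, is_DMPGI A Y) /\ (forall X, is_DMPGI A X <-> is_GMPI A Ae X)) /\
  (* otherwise A^D does not exist *)
  (t <> r -> ~ (exists Y, is_DMPGI A Y)).
Proof.
case=> HU HV [Hrt Htm] [Happ Hinf Hzero Hord] HA Ae.
have F1 : dmul A (dtr Ae) = dmul Ae (dtr Ae).
  rewrite /Ae /ess_part HA !dtr_mul !dtrK !dmulA !(orthKl _ HV) !ddiag_tr !ddiag_mul'.
  congr dmul; congr dmul; apply: ddiag_eq => i _.
  case: (i < n)%N => //; case: (i < r)%N => //; by rewrite !dm0r.
have F2 : dmul (dtr Ae) A = dmul (dtr Ae) Ae.
  rewrite /Ae /ess_part HA !dtr_mul !dtrK !dmulA !(orthKl _ HU) !ddiag_tr !ddiag_mul'.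
  congr dmul; congr dmul; apply: ddiag_eq => i _.
  case: (i < m)%N => //; case: (i < r)%N => //; by rewrite !dm0l.
have F3 : exists Y, is_DMPGI Ae Y.
  have inv0 : forall i, (i < r)%N -> ds (mu i) != 0.
    by move=> i Hi; rewrite gt_eqF //; apply: Happ.
  exists (dmul (dmul V (ddiag n m (fun i => if (i < r)%N then dinv (mu i) else dzero R))) (dtr U)).
  rewrite /Ae /ess_part; split.
  - rewrite !dmulA !(orthKl _ HV) !(orthKl _ HU) !ddiag_mul'.
    congr dmul; congr dmul; apply: ddiag_eq => i Hi.
    move: Hi; rewrite leq_min => /andP [Hm Hn]; rewrite Hm Hn.
    case: ltnP => Hir; first by rewrite dm_inv1 // inv0.
    by rewrite !dm0r.
  - rewrite !dmulA !(orthKl _ HV) !(orthKl _ HU) !ddiag_mul'.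
    congr dmul; congr dmul; apply: ddiag_eq => i Hi.
    move: Hi; rewrite leq_min => /andP [Hn Hm]; rewrite Hm Hn.
    case: ltnP => Hir; first by rewrite dm_inv2 // inv0.
    by rewrite !dm0r.
  - by rewrite !dmulA !(orthKl _ HV) !ddiag_mul' !dtr_mul dtrK ddiag_tr !dmulA.
  - by rewrite !dmulA !(orthKl _ HU) !ddiag_mul' !dtr_mul dtrK ddiag_tr !dmulA.
have F4 : t <> r -> ~ (exists Y, is_DMPGI A Y).
  move=> Htr [Y [HAY _ _ _]].
  have rt : (r < t)%N.
    by rewrite ltn_neqAle Hrt andbT; apply/eqP => E; apply: Htr; rewrite E.
  have rm : (r < m)%N := leq_trans rt (leq_trans Htm (geq_minl m n)).
  have rn : (r < n)%N := leq_trans rt (leq_trans Htm (geq_minr m n)).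
  have [Hs Hd] := Hinf r (leqnn r) rt.
  have e1 : dmul (dtr U) (dmul A V) = ddiag m n mu.
    by rewrite HA !dmulA (orthKl _ HU) (orthK1 HV) dmul1r.
  have key : dmul (ddiag m n mu) (dmul (dmul (dtr V) (dmul Y U)) (ddiag m n mu)) = ddiag m n mu.
    by rewrite -[in RHS]e1 -HAY HA !dmulA (orthKl _ HU) (orthK1 HV) dmul1r.
  move/(congr1 (fun Z => mxd Z (Ordinal rm) (Ordinal rn))): key.
  rewrite ddiagE /dmul /=.
  rewrite mxE rdiag_row0 //= mulmxA rdiag_col0 //= add0r mxE eqxx => E.
  by move: Hd; rewrite -E ltxx.
split; first by split=> // X; split; [apply: L1 | apply: L2].
split; last exact: F4.
move=> Htr.
have AAe : A = Ae.
  rewrite HA /Ae /ess_part; congr dmul; congr dmul; apply: ddiag_eq => i Hi.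
  case: (ltnP i r) => // Hri; by rewrite Hzero // Htr.
split; first by rewrite AAe.
move=> X; split => H.
  by apply: L2 => //; move: H; rewrite AAe.
by move: (L1 H); rewrite -AAe.
Qed.
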